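(* Let $f:\mathbb{R}^n\to\mathbb{R}$ be convex, differentiable and bounded from below, with $\nabla f$ being $L$-Lipschitz continuous ($L>0$), let $\lambda>0$, and let $H(x)=f(x)+\lambda\|x\|_0$. Let $\{x_k\},\{y_k\}$ be generated by the VMEPIHT method described in the context. Then: (1) the sequence $\{H(x_k)\}$ is non-increasing; (2) $\sum_{k=1}^\infty\|x_k-y_k\|^2<\infty$, and in particular $\|x_k-y_k\|\to 0$; (3) the index set $I(x_k)$ changes only finitely often, i.e. there is $K$ such that $I(x_k)=I(x_K)$ for all $k\geq K$.
   Context: $\|x\|_0$ denotes the number of nonzero components of $x\in\mathbb{R}^n$. For $x\in\mathbb{R}^n$, $I(x):=\{i: x_i=0\}$. For an index set $I\subseteq\{1,\dots,n\}$, $C_I:=\{x\in\mathbb{R}^n: x_i=0 \text{ for all } i\in I\}$, and $P_C(x)=\arg\min_{z\in C}\frac12\|z-x\|^2$ is the Euclidean projection onto $C$. VMEPIHT method: fix parameters $\mu>0$, $\lambda>0$ and a starting point $y_0\in\mathbb{R}^n$. For $k=0,1,2,\dots$: choose $x_k\in\arg\min_{x\in\mathbb{R}^n}\ \lambda\|x\|_0+\frac{L}{2}\|x-y_k+\frac1L\nabla f(y_k)\|^2+\frac{\mu}{2}\|x-y_k\|^2$; then choose a symmetric positive definite matrix $H_k$ and a step length $\alpha_k\ge 0$, and set $y_{k+1}=P_{C_{I(x_k)}}(x_k-\alpha_kH_k\nabla f(x_k))$, where $\alpha_k$ is chosen so that $f(y_{k+1})\leq f(x_k)$. *)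

(* Defs.v *)
From HB Require Import structures.
From mathcomp Require Import all_boot all_order all_algebra.
From mathcomp Require Import all_classical all_reals all_analysis.
Set Implicit Arguments. Unset Strict Implicit. Unset Printing Implicit Defensive.
Import Order.TTheory GRing.Theory Num.Theory.
Import numFieldNormedType.Exports.
Local Open Scope ring_scope.

Section VMEPIHT.
Variables (R : realType) (n : nat).
Notation vec := 'rV[R]_n.

Definition dotv (u v : vec) : R := \sum_(i < n) u 0 i * v 0 i.
Definition nsq (u : vec) : R := dotv u u.
Definition enorm (u : vec) : R := Num.sqrt (nsq u).

Definition norm0 (x : vec) : nat := #|[set i : 'I_n | x 0 i != 0]|.

Definition Iset (x : vec) : {set 'I_n} := [set i : 'I_n | x 0 i == 0].

Definition C_I (I : {set 'I_n}) : set vec := [set x | forall i, i \in I -> x 0 i = 0].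

Definition is_proj (C : set vec) (x z : vec) : Prop :=
  C z /\ forall w, C w -> nsq (z - x) / 2 <= nsq (w - x) / 2.

Definition convex_fun (f : vec -> R) : Prop :=
  forall (x y : vec) (t : R), 0 <= t -> t <= 1 ->
    f (t *: x + (1 - t) *: y) <= t * f x + (1 - t) * f y.

Definition is_gradient (f : vec -> R) (g : vec -> vec) : Prop :=
  forall x, differentiable f x /\ forall h, 'd f x h = dotv (g x) h.

Definition lipschitz_with (g : vec -> vec) (L : R) : Prop :=
  forall x y, enorm (g x - g y) <= L * enorm (x - y).

Definition sym_posdef (H : 'M[R]_n) : Prop :=
  H^T = H /\ forall v : vec, v != 0 -> 0 < (v *m H *m v^T) 0 0.

Definition xobj (f : vec -> R) (g : vec -> vec) (L mu lam : R) (y x : vec) : R :=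
  lam * (norm0 x)%:R + L / 2 * nsq (x - y + L^-1 *: g y) + mu / 2 * nsq (x - y).

Definition Hobj (f : vec -> R) (lam : R) (x : vec) : R := f x + lam * (norm0 x)%:R.

Definition VMEPIHT (f : vec -> R) (g : vec -> vec) (L mu lam : R)
  (x y : nat -> vec) (Hm : nat -> 'M[R]_n) (alpha : nat -> R) : Prop :=
  forall k,
    (forall z, xobj f g L mu lam (y k) (x k) <= xobj f g L mu lam (y k) z) /\
    sym_posdef (Hm k) /\ 0 <= alpha k /\
    is_proj (C_I (Iset (x k))) (x k - alpha k *: (g (x k) *m Hm k)) (y k.+1) /\
    f (y k.+1) <= f (x k).

End VMEPIHT.

(* Main.v *)
Require Import Defs.
From HB Require Import structures.
From mathcomp Require Import all_boot all_order all_algebra.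
From mathcomp Require Import all_classical all_reals all_analysis.
From mathcomp Require Import ring lra.
Set Implicit Arguments. Unset Strict Implicit.
Import Order.TTheory GRing.Theory Num.Theory.
Import numFieldNormedType.Exports.
Local Open Scope classical_set_scope.
Local Open Scope ring_scope.

Section Alg.
Variables (R : realType) (n : nat).
Implicit Types (u v w : 'rV[R]_n).

Lemma dotvC u v : dotv u v = dotv v u.
Proof. by apply: eq_bigr => i _; rewrite mulrC. Qed.

Lemma dotvDl u v w : dotv (u + v) w = dotv u w + dotv v w.
Proof. by rewrite /dotv -big_split; apply: eq_bigr => i _; rewrite mxE mulrDl. Qed.

Lemma dotvZl (c : R) u w : dotv (c *: u) w = c * dotv u w.
Proof. by rewrite /dotv mulr_sumr; apply: eq_bigr => i _; rewrite mxE mulrA. Qed.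

Lemma dotvNl u w : dotv (- u) w = - dotv u w.
Proof. by rewrite -scaleN1r dotvZl mulN1r. Qed.

Lemma dotvBl u v w : dotv (u - v) w = dotv u w - dotv v w.
Proof. by rewrite dotvDl dotvNl. Qed.

Lemma dotvDr u v w : dotv w (u + v) = dotv w u + dotv w v.
Proof. by rewrite dotvC dotvDl !(dotvC w). Qed.

Lemma dotvZr (c : R) u w : dotv w (c *: u) = c * dotv w u.
Proof. by rewrite dotvC dotvZl dotvC. Qed.

Lemma nsq_ge0 u : 0 <= nsq u.
Proof. by apply: sumr_ge0 => i _; rewrite -expr2 sqr_ge0. Qed.

Lemma nsqD u v : nsq (u + v) = nsq u + 2 * dotv u v + nsq v.
Proof. rewrite /nsq dotvDl !dotvDr (dotvC v u); lra. Qed.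

Lemma nsqZ (c : R) u : nsq (c *: u) = c ^+ 2 * nsq u.
Proof. by rewrite /nsq dotvZl dotvZr mulrA expr2. Qed.

Lemma nsq0 : nsq (0 : 'rV[R]_n) = 0.
Proof. by rewrite -(scale0r 0) nsqZ expr0n /= mul0r. Qed.

Lemma enorm_sq u : enorm u ^+ 2 = nsq u.
Proof. by rewrite sqr_sqrtr // nsq_ge0. Qed.

Lemma enorm_ge0 u : 0 <= enorm u.
Proof. exact: sqrtr_ge0. Qed.

Lemma enormZ (c : R) u : enorm (c *: u) = `|c| * enorm u.
Proof. by rewrite /enorm nsqZ sqrtrM ?sqr_ge0 // sqrtr_sqr. Qed.

Lemma dot_bound u d (s : R) : 0 < s -> enorm u <= s * enorm d ->
  dotv u d <= s * nsq d.
Proof.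
move=> s0 h.
have h2 : nsq u <= s ^+ 2 * nsq d.
  rewrite -!enorm_sq -exprMn expr2 [X in _ <= X]expr2.
  by apply: ler_pM => //; apply: enorm_ge0.
have := nsq_ge0 (u + (- s) *: d).
rewrite nsqD nsqZ dotvZr sqrrN => h3.
have : s * dotv u d <= s * (s * nsq d) by nra.
by rewrite ler_pM2l.
Qed.

Lemma coord_le u i : `|u 0 i| <= enorm u.
Proof.
rewrite -(sqrtr_sqr (u 0 i)) /enorm ler_sqrt; last exact: nsq_ge0.
rewrite /nsq /dotv (bigD1 i) //= -expr2 lerDl.
by apply: sumr_ge0 => j _; rewrite -expr2 sqr_ge0.
Qed.

End Alg.

Lemma phi_derive (R : realType) (n : nat) (f : 'rV[R]_n -> R) (g : 'rV[R]_n -> 'rV[R]_n) (y d : 'rV[R]_n) (t : R) :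
  is_gradient f g ->
  is_derive t 1 (fun s => f (y + s *: d)) (dotv (g (y + t *: d)) d).
Proof.
move=> hg; have [df dg] := hg (y + t *: d).
have der : derivable f (y + t *: d) d := diff_derivable df.
have E : (fun h : R => h^-1 *: (((fun s => f (y + s *: d)) \o shift t) (h *: 1) - f (y + t *: d)))
   = (fun h : R => h^-1 *: ((f \o shift (y + t *: d)) (h *: d) - f (y + t *: d))).
  apply/funext => h /=; congr (_ *: (f _ - _)).
  have -> : h%:A = h by rewrite /GRing.scale /= mulr1.
  by rewrite scalerDl addrCA.
split.
  by rewrite /derivable E.
by rewrite /derive E -/(derive f (y + t *: d) d) deriveE // dg.
Qed.


Lemma psi_derive (R : realType) (phi : R -> R) dphi (a b t : R) :
  is_derive t 1 phi dphi ->
  is_derive t 1 (phi - a \*: id - b \*: (id * id)) (dphi - a - b * (t + t)).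
Proof.
move=> h.
have := is_deriveB (is_deriveB h (is_deriveZ a (is_derive_id t (1:R))))
   (is_deriveZ b (is_deriveM (is_derive_id t (1:R)) (is_derive_id t (1:R)))).
move/is_derive_eq; apply.
by rewrite /GRing.scale /= !mulr1.
Qed.

Lemma descent (R : realType) (n : nat) (f : 'rV[R]_n -> R) (g : 'rV[R]_n -> 'rV[R]_n) (L : R) x y :
  is_gradient f g -> lipschitz_with g L -> 0 < L ->
  f x <= f y + dotv (g y) (x - y) + L / 2 * nsq (x - y).
Proof.
move=> hg hL L0.
set d := x - y.
have xE : x = y + 1 *: d by rewrite scale1r /d addrC subrK.
set a := dotv (g y) d; set b := L / 2 * nsq d.
pose phi := fun s : R => f (y + s *: d).
pose psi := phi - a \*: id - b \*: (id * id).
have hd t := @psi_derive R phi _ a b t (@phi_derive R n f g y d t hg).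
have cont : {within `[0, 1], continuous psi}.
  apply: continuous_subspaceT => t; apply: differentiable_continuous.
  by apply/derivable1_diffP; have [+ _] := hd t.
have [c c01 E] := MVT ltr01 (fun t _ => hd t) cont.
move: E; rewrite /psi /phi !fctE /= !scale0r !scaler0 addr0 -xE mulr0 scaler0 subr0 subr0 mulr1.
have -> : a%:A = a by rewrite /GRing.scale /= mulr1.
have -> : b%:A = b by rewrite /GRing.scale /= mulr1.
rewrite subr0 mulr1 => E.
have cpos : 0 < c by move: c01; rewrite in_itv /= => /andP[].
have key : dotv (g (y + c *: d)) d - a <= b * (c + c).
  rewrite /a -dotvBl /b.
  have -> : L / 2 * nsq d * (c + c) = (L * c) * nsq d by field.
  apply: dot_bound; first exact: mulr_gt0.
  apply: (le_trans (hL _ _)).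
  rewrite addrC addKr enormZ gtr0_norm // mulrA //.
lra.
Qed.

Lemma step (R : realType) (n : nat) (f : 'rV[R]_n -> R) (g : 'rV[R]_n -> 'rV[R]_n)
  (L mu lam : R) (x y : nat -> 'rV[R]_n) (Hm : nat -> 'M[R]_n) (alpha : nat -> R) :
  is_gradient f g -> 0 < L -> lipschitz_with g L -> 0 < mu -> 0 < lam ->
  VMEPIHT f g L mu lam x y Hm alpha ->
  forall k, Hobj f lam (x k.+1) + mu / 2 * nsq (x k.+1 - y k.+1) <= Hobj f lam (x k).
Proof.
move=> hg L0 hL mu0 lam0 hV k.
have [_ [_ [_ [[Cy _] fy]]]] := hV k.
have [hmin _] := hV k.+1.
have := hmin (y k.+1); rewrite /xobj subrr add0r nsq0 mulr0 addr0.
have dsc := @descent R n f g L (x k.+1) (y k.+1) hg hL L0.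
have hN : (norm0 (y k.+1))%:R <= (norm0 (x k))%:R :> R.
  rewrite ler_nat /norm0; apply: subset_leq_card; apply/fintype.subsetP => i; rewrite !inE.
  apply: contra => /eqP xi0; apply/eqP; apply: Cy; by rewrite inE xi0.
have hN' : lam * (norm0 (y k.+1))%:R <= lam * (norm0 (x k))%:R by rewrite ler_pM2l.
rewrite (nsqD (x k.+1 - y k.+1)) nsqZ dotvZr.
rewrite /Hobj.
set D := x k.+1 - y k.+1.
set nD := nsq D; set dDG := dotv D (g (y k.+1)); set nG := nsq (g (y k.+1)).
have e : L / 2 * (nD + 2 * (L^-1 * dDG) + L^-1 ^+ 2 * nG) = L / 2 * nD + dDG + L / 2 * (L^-1 ^+ 2 * nG).
  by field; rewrite gt_eqF.
rewrite e; move: dsc; rewrite /dDG dotvC -/dDG.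
rewrite -/D -/nD.
lra.
Qed.

Section Coord.
Variables (R : realType) (n : nat).

Lemma dotv_delta (u : 'rV[R]_n) i : dotv u (delta_mx 0 i) = u 0 i.
Proof.
rewrite /dotv (bigD1 i) //= big1 ?addr0; first by rewrite mxE !eqxx mulr1.
by move=> j /negPf ji; rewrite mxE ji andbF mulr0.
Qed.

Lemma nsqDdelta (u : 'rV[R]_n) i c :
  nsq (u + c *: delta_mx 0 i) = nsq u + 2 * c * u 0 i + c ^+ 2.
Proof.
rewrite nsqD nsqZ dotvZr dotv_delta /nsq dotv_delta mxE !eqxx mulr1; lra.
Qed.

Lemma entry_delta (x : 'rV[R]_n) i c j :
  (x + c *: delta_mx 0 i) 0 j = x 0 j + (if j == i then c else 0).
Proof. by rewrite !mxE eqxx /=; case: (j == i); rewrite ?mulr1 ?mulr0. Qed.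

Lemma nz_bound (f : 'rV[R]_n -> R) (g : 'rV[R]_n -> 'rV[R]_n) (L mu lam : R) (x y : 'rV[R]_n) :
  (forall z, xobj f g L mu lam y x <= xobj f g L mu lam y z) ->
  0 < L -> 0 < mu -> 0 < lam ->
  forall i, x 0 i != 0 -> lam / (L + mu) <= x 0 i ^+ 2.
Proof.
move=> hmin L0 mu0 lam0 i xi0.
set e := delta_mx 0 i : 'rV[R]_n.
have zE c : forall z, z = x + c *: e ->
   z - y + L^-1 *: g y = (x - y + L^-1 *: g y) + c *: e /\ z - y = (x - y) + c *: e.
  by move=> z ->; rewrite (addrAC x (c *: e)) (addrAC (x - y)).
set u := x - y + L^-1 *: g y; set w := x - y.
have h1 := hmin (x + (- x 0 i) *: e).
have h2 := hmin (x + (x 0 i) *: e).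
move: h1 h2; rewrite /xobj.
have [-> ->] := zE (- x 0 i) _ erefl.
have [-> ->] := zE (x 0 i) _ erefl.
rewrite -/u -/w !nsqDdelta.
have N1 : (norm0 (x + (- x 0 i) *: e))%:R + 1 = (norm0 x)%:R :> R.
  rewrite /norm0 [in RHS](cardsD1 i) inE xi0 natrD addrC; congr (_ + _%:R).
  apply: eq_card => j; rewrite !inE entry_delta.
  case: (eqVneq j i) => [->|ji]; first by rewrite addrN eqxx.
  by rewrite addr0.
have N2 : norm0 (x + (x 0 i) *: e) = norm0 x.
  rewrite /norm0; apply: eq_card => j; rewrite !inE entry_delta.
  case: (eqVneq j i) => [->|ji]; last by rewrite addr0.
  by rewrite -mulr2n mulrn_eq0 /= xi0.
rewrite N2 -N1.
move=> h1 h2.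
have : lam <= (L + mu) * x 0 i ^+ 2 by nra.
by rewrite ler_pdivrMr ?addr_gt0 // mulrC.
Qed.
End Coord.

From mathcomp Require Import zify.

Lemma mono_sub (T : finType) (A : nat -> {set T}) N0 :
  (forall k, (N0 <= k)%N -> A k \subset A k.+1) ->
  forall K j, (N0 <= K)%N -> A K \subset A (K + j)%N.
Proof.
move=> h K j hK; elim: j => [|j IH]; first by rewrite addn0.
by apply: (fintype.subset_trans IH); rewrite addnS; apply: h; lia.
Qed.

Lemma stab (T : finType) (A : nat -> {set T}) N0 :
  (forall k, (N0 <= k)%N -> A k \subset A k.+1) ->
  exists K, forall k, (K <= k)%N -> A k = A K.
Proof.
move=> h.
suff: forall m K, (N0 <= K)%N -> (#|T| - #|A K| <= m)%N ->
    exists K', forall k, (K' <= k)%N -> A k = A K'.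
  by apply => //; apply: leq_subr.
have ms K k : (N0 <= K)%N -> (K <= k)%N -> A K \subset A k.
  by move=> hK hk; have := mono_sub h (k - K) hK; rewrite subnKC.
elim=> [|m IH] K hK hm.
  exists K => k hk; apply/eqP; rewrite eq_sym eqEcard ms //=.
  apply: (leq_trans (max_card _)); lia.
case: (pselect (exists k, (K <= k)%N /\ A k != A K)) => [[k [hk ne]] | no].
  have lt : (#|A K| < #|A k|)%N.
    by apply: proper_card; rewrite finset.properEneq eq_sym ne ms.
  apply: (IH k); first lia.
  have : (#|A k| <= #|T|)%N by apply: max_card.
  lia.
exists K => k hk; apply/eqP; apply/negPn/negP => ne; apply: no; exists k; split => //.
Qed.

Unset Implicit Arguments.
Set Strict Implicit.

Theorem lemma4 (R : realType) (n : nat) (f : 'rV[R]_n -> R) (g : 'rV[R]_n -> 'rV[R]_n)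
  (L mu lam : R) (x y : nat -> 'rV[R]_n) (Hm : nat -> 'M[R]_n) (alpha : nat -> R) :
  convex_fun f ->
  is_gradient f g ->
  (exists m : R, forall z, m <= f z) ->
  0 < L -> lipschitz_with g L ->
  0 < mu -> 0 < lam ->
  VMEPIHT f g L mu lam x y Hm alpha ->
  (forall k, Hobj f lam (x k.+1) <= Hobj f lam (x k)) /\
  ((\sum_(1 <= k <oo) (nsq (x k - y k))%:E < +oo)%E /\
   (fun k => enorm (x k - y k)) @ \oo --> (0 : R)) /\
  (exists K : nat, forall k, (K <= k)%N -> Iset (x k) = Iset (x K)).
Proof.
move=> _ hg [m hm] L0 hL mu0 lam0 hV.
have st := step hg L0 hL mu0 lam0 hV.
have mono k : Hobj f lam (x k.+1) <= Hobj f lam (x k).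
  have := st k; have := nsq_ge0 (x k.+1 - y k.+1).
  have : 0 < mu / 2 by rewrite divr_gt0.
  nra.
have Hlb z : m <= Hobj f lam z.
  rewrite /Hobj; have := hm z; have : 0 <= lam * (norm0 z)%:R by rewrite mulr_ge0 // ltW.
  lra.
set u := fun k => nsq (x k - y k).
have u0 k : 0 <= u k by exact: nsq_ge0.
have ustep k : u k.+1 <= 2 / mu * (Hobj f lam (x k) - Hobj f lam (x k.+1)).
  have := st k; rewrite -/(u k.+1) => h.
  have h' : mu / 2 * u k.+1 <= Hobj f lam (x k) - Hobj f lam (x k.+1) by lra.
  have e : 2 / mu * (mu / 2 * u k.+1) = u k.+1 by field; rewrite gt_eqF.
  by rewrite -{1}e ler_pM2l ?divr_gt0.
have psum N : \sum_(0 <= k < N.+1) u k <= u 0%N + 2 / mu * (Hobj f lam (x 0%N) - Hobj f lam (x N)).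
  elim: N => [|N IH]; first by rewrite big_nat1 subrr mulr0 addr0.
  rewrite big_nat_recr //=.
  have := ustep N; lra.
set B := u 0%N + 2 / mu * (Hobj f lam (x 0%N) - m).
have psumB N : \sum_(0 <= k < N) u k <= B.
  have hB : 0 <= 2 / mu * (Hobj f lam (x 0%N) - m).
    by apply: mulr_ge0; [rewrite divr_ge0 // ltW | rewrite subr_ge0].
  case: N => [|N]; first by rewrite big_geq // /B; have := u0 0%N; lra.
  apply: (le_trans (psum N)); rewrite /B lerD2l ler_pM2l ?divr_gt0 //.
  by rewrite lerD2l lerN2.
have cvs : cvgn (series u).
  apply: nondecreasing_is_cvgn; first by apply: nondecreasing_series => k _ _.
  by exists B => _ [N _ <-]; apply: psumB.
have u_to0 := cvg_series_cvg_0 cvs.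
have e_to0 : (fun k => enorm (x k - y k)) @ \oo --> (0 : R).
  rewrite -sqrtr0; apply: (cvg_comp _ _ u_to0); exact: sqrt_continuous.
split; first exact: mono.
split; first split.
- apply: (@le_lt_trans _ _ B%:E); last exact: ltry.
  apply: lime_le.
    by apply: ereal_nondecreasing_is_cvgn; apply: ereal_nondecreasing_series => k _ _; rewrite lee_fin; apply: nsq_ge0.
  apply: nearW => N; rewrite sumEFin lee_fin.
  case: N => [|N]; first by rewrite big_geq //; have := psumB 0%N; rewrite big_geq.
  apply: le_trans (psumB N.+1); rewrite [X in _ <= X](big_ltn) //= /u /= lerDr; exact: nsq_ge0.
- exact: e_to0.
- set delta := lam / (L + mu).
  have dpos : 0 < delta by rewrite divr_gt0 // addr_gt0.
  have sd : 0 < Num.sqrt delta by rewrite sqrtr_gt0.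
  case: (cvgr0_norm_lt _ e_to0 _ sd) => N0 _ hN0.
  apply: (@stab _ (fun k => Iset (x k)) N0) => k hk.
  apply/fintype.subsetP => i; rewrite !inE => /eqP xi0; apply/negPn/negP => nz.
  have [_ [_ [_ [[Cy _] _]]]] := hV k.
  have yi : y k.+1 0 i = 0 by apply: Cy; rewrite inE xi0.
  have [hmin _] := hV k.+1.
  have b := nz_bound hmin L0 mu0 lam0 nz.
  have c := coord_le (x k.+1 - y k.+1) i.
  rewrite !mxE yi subr0 in c.
  have h := hN0 k.+1 (leqW hk).
  rewrite /= ger0_norm ?enorm_ge0 in h.
  have sq := sqr_sqrtr (ltW dpos).
  have xa : x k.+1 0 i ^+ 2 = `|x k.+1 0 i| ^+ 2 by rewrite -normrX ger0_norm // sqr_ge0.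
  have := normr_ge0 (x k.+1 0 i).
  rewrite -/delta in b.
  nra.
  all: by [].
Qed.
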